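(* Let $X$ be a normal Hausdorff topological space and $\Phi$ a local semiflow on $X$. Let $M\subset X$ be closed, and assume $M$ attracts an admissible neighborhood $N$ of itself. Then $\mathscr A=\omega(N)$ is an attractor of $\Phi$.
   Context: A local semiflow $\Phi$ on $X$ is a continuous map from an open subset $\mathcal D_\Phi\subset\mathbb R^+\times X$ to $X$ such that: (i) for each $x$ there is $T_x\in(0,\infty]$ with $(t,x)\in\mathcal D_\Phi$ iff $t\in[0,T_x)$; (ii) $\Phi(0,x)=x$; (iii) if $(t+s,x)\in\mathcal D_\Phi$ with $t,s\ge0$ then $\Phi(t+s,x)=\Phi(t,\Phi(s,x))$. Write $\Phi(t)x=\Phi(t,x)$, $\Phi(J)M=\{\Phi(t)x:x\in M,\ t\in J\cap[0,T_x)\}$, $\Phi(t)M=\Phi(\{t\})M$. Convention: $U$ is a neighborhood of $A$ if $\overline A\subset\mathrm{int}\,U$. $N$ is admissible if for any $x_n\in N$, $t_n\to\infty$ with $\Phi([0,t_n])x_n\subset N$, the sequence $\Phi(t_n)x_n$ has a convergent subsequence. $\omega(N)=\{y:\exists x_n\in N,\ t_n\to\infty,\ \Phi(t_n)x_n\to y\}$. A set $K$ is invariant if $\Phi(t)K\subset K$ and $K\subset\Phi(t)K$ for all $t\ge0$. $K$ attracts $B$ if $T_x=\infty$ for all $x\in B$ and for every neighborhood $V$ of $K$ there is $t_0>0$ with $\Phi(t)B\subset V$ for all $t>t_0$. A set is s-compact if every sequence in it has a subsequence converging to a point of the set. An attractor is a nonempty s-compact invariant set $\mathscr A$ for which there is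 a neighborhood $N'$ of $\mathscr A$ such that $\mathscr A$ attracts $N'$ and every s-compact invariant subset of $N'$ is contained in $\mathscr A$. Normal: disjoint closed sets have disjoint open neighborhoods. *)

(* Defs.v *)
From HB Require Import structures.
From mathcomp Require Import all_boot all_order all_algebra.
From mathcomp Require Import all_classical all_reals all_analysis.
Set Implicit Arguments. Unset Strict Implicit. Unset Printing Implicit Defensive.
Import Order.TTheory GRing.Theory Num.Theory.
Import numFieldNormedType.Exports.
Local Open Scope classical_set_scope.
Local Open Scope ring_scope.

Section LocalSemiflow.
Variables (R : realType) (X : topologicalType).

Definition normal_sep : Prop :=
  forall A B : set X, closed A -> closed B -> A `&` B = set0 ->
    exists U V : set X, [/\ open U, open V, A `<=` U, B `<=` V & U `&` V = set0].

(* A local semiflow is given by the escape times T : X -> \bar R (T_x in (0,+oo])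
   and a map phi : R -> X -> X, of which only the values on the domain
   D = {(t,x) | 0 <= t < T_x} matter. *)
Definition lsf_dom (T : X -> \bar R) : set (R * X) :=
  [set p | 0 <= p.1 /\ (p.1%:E < T p.2)%E].

Definition is_local_semiflow (T : X -> \bar R) (phi : R -> X -> X) : Prop :=
  [/\ (forall x, (0 < T x)%E),
      (exists U : set (R * X), open U /\ lsf_dom T = U `&` [set p | 0 <= p.1]),
      {within lsf_dom T, continuous (fun p : R * X => phi p.1 p.2)},
      (forall x, phi 0 x = x) &
      (forall t s x, 0 <= t -> 0 <= s -> ((t + s)%:E < T x)%E ->
         lsf_dom T (t, phi s x) /\ phi (t + s) x = phi t (phi s x))].

Variables (T : X -> \bar R) (phi : R -> X -> X).

Definition lsf_image (J : set R) (M : set X) : set X :=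
  [set y | exists x t, [/\ M x, J t, lsf_dom T (t, x) & y = phi t x]].

Definition nbhd_of (U A : set X) : Prop := closure A `<=` interior U.

Definition tends_to_infty (t : nat -> R) : Prop := t @ \oo --> +oo.

Definition has_cvg_subseq (u : nat -> X) (P : set X) : Prop :=
  exists (f : nat -> nat) (y : X),
    [/\ (forall n, (f n < f n.+1)%N), P y & (u \o f) @ \oo --> y].

Definition admissible (N : set X) : Prop :=
  forall (x : nat -> X) (t : nat -> R),
    (forall n, N (x n)) -> tends_to_infty t ->
    (forall n, lsf_dom T (t n, x n)) ->
    (forall n, lsf_image `[0, t n] [set x n] `<=` N) ->
    has_cvg_subseq (fun n => phi (t n) (x n)) setT.

Definition omega (N : set X) : set X :=
  [set y | exists (x : nat -> X) (t : nat -> R),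
     [/\ (forall n, N (x n)), tends_to_infty t,
         (forall n, lsf_dom T (t n, x n)) &
         (fun n => phi (t n) (x n)) @ \oo --> y]].

Definition invariant (K : set X) : Prop :=
  forall t, 0 <= t -> lsf_image [set t] K `<=` K /\ K `<=` lsf_image [set t] K.

Definition attracts (K B : set X) : Prop :=
  (forall x, B x -> T x = +oo%E) /\
  forall V, nbhd_of V K -> exists t0, 0 < t0 /\
    forall t, t0 < t -> lsf_image [set t] B `<=` V.

Definition s_compact (K : set X) : Prop :=
  forall u : nat -> X, (forall n, K (u n)) -> has_cvg_subseq u K.

Definition attractor (A : set X) : Prop :=
  [/\ A !=set0, s_compact A, invariant A &
      exists N', [/\ nbhd_of N' A, attracts A N' &
        forall K, s_compact K -> invariant K -> K `<=` N' -> K `<=` A]].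

End LocalSemiflow.

(* Main.v *)
Require Import Defs.
From HB Require Import structures.
From mathcomp Require Import all_boot all_order all_algebra.
From mathcomp Require Import all_classical all_reals all_analysis.
From mathcomp Require Import lra.
Import Order.TTheory GRing.Theory Num.Theory.
Import numFieldNormedType.Exports.
Local Open Scope classical_set_scope.
Local Open Scope ring_scope.

Lemma near_oo_P (P : nat -> Prop) :
  (\forall n \near \oo, P n) <-> exists n0, forall n, (n0 <= n)%N -> P n.
Proof.
split; first by case=> n0 _ H; exists n0 => n /H.
by case=> n0 H; exists n0.
Qed.

Lemma tti_P (R : realType) (t : nat -> R) :
  tends_to_infty t <-> forall A, exists n0, forall n, (n0 <= n)%N -> A <= t n.
Proof.
rewrite /tends_to_infty; split.
  by move/cvgryPge => H A; apply/near_oo_P; apply: H.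
by move=> H; apply/cvgryPge => A; apply/near_oo_P; apply: H.
Qed.

Lemma cvgX_P (X : topologicalType) (u : nat -> X) (y : X) :
  u @ \oo --> y <-> forall U, nbhs y U -> exists n0, forall n, (n0 <= n)%N -> U (u n).
Proof.
split; first by move=> H U /H /near_oo_P.
by move=> H U /H /near_oo_P.
Qed.

Lemma incr_ge (f : nat -> nat) : (forall n, (f n < f n.+1)%N) -> forall n, (n <= f n)%N.
Proof. by move=> Hf; elim=> // n IH; apply: leq_ltn_trans IH (Hf n). Qed.

Lemma subseq_cvgX (X : topologicalType) (u : nat -> X) (y : X) (f : nat -> nat) :
  (forall n, (f n < f n.+1)%N) -> u @ \oo --> y -> (u \o f) @ \oo --> y.
Proof.
move=> Hf /cvgX_P H; apply/cvgX_P => U /H [n0 Hn0]; exists n0 => n Hn.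
by apply: Hn0; exact: (leq_trans Hn (@incr_ge f Hf n)).
Qed.

Lemma subseq_tti (R : realType) (t : nat -> R) (f : nat -> nat) :
  (forall n, (f n < f n.+1)%N) -> tends_to_infty t -> tends_to_infty (t \o f).
Proof.
move=> Hf /tti_P H; apply/tti_P => A; have [n0 Hn0] := H A; exists n0 => n Hn.
by apply: Hn0; exact: (leq_trans Hn (@incr_ge f Hf n)).
Qed.

Lemma tti_nat (R : realType) : tends_to_infty (fun n : nat => (n%:R : R)).
Proof.
apply/tti_P => A; exact/near_oo_P/nbhs_infty_ger.
Qed.

Lemma seq_closure (X : topologicalType) (u : nat -> X) (y : X) (U : set X) :
  u @ \oo --> y -> (exists n0, forall n, (n0 <= n)%N -> U (u n)) -> closure U y.
Proof.
move=> /cvgX_P H [n0 Hn0] B /H [n1 Hn1]; exists (u (maxn n0 n1)); split.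
  by apply: Hn0; exact: leq_maxl.
by apply: Hn1; exact: leq_maxr.
Qed.

Lemma within_seq (R : realType) (X : topologicalType) (D : set (R * X))
  (g : R * X -> X) (p : R * X) (q : nat -> R * X) :
  {within D, continuous g} -> D p -> (forall n, D (q n)) ->
  q @ \oo --> p -> (g \o q) @ \oo --> g p.
Proof.
move=> Hc Dp Dq Hq.
have H1 := (subspace_continuousP D g).1 Hc p Dp.
have Hw : q @ \oo --> within D (nbhs p).
  move=> B; rewrite !nbhs_simpl /within => HB.
  have H2 : \forall n \near \oo, D (q n) -> B (q n) := Hq _ HB.
  by move: H2; apply: filterS => n /(_ (Dq n)).
exact: (cvg_comp q g Hw H1).
Qed.

Lemma pair_cvg (R : realType) (X : topologicalType) (t : R) (z : nat -> X) (v : X) :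
  z @ \oo --> v -> (fun n => (t, z n)) @ \oo --> (t, v).
Proof.
move=> Hz; exact: (cvg_pair (cvg_cst t) Hz).
Qed.

Theorem theorem4p6 (R : realType) (X : topologicalType)
  (T : X -> \bar R) (phi : R -> X -> X) (M N : set X) :
  normal_sep X -> hausdorff_space X ->
  is_local_semiflow T phi ->
  closed M -> M !=set0 ->
  nbhd_of N M -> admissible T phi N -> attracts T phi M N ->
  attractor T phi (omega T phi N).
Proof.
move=> Hnorm Hhaus [HT0 _ Hcont H0 Hsg] HMcl [m Mm] HNM Hadm [HinfN Hatt].
have NiN : interior N `<=` N := @interior_subset _ N.
have [U [W [oU oW sMU sCW UW0]]] : exists U W : set X, [/\ open U, open W,
    closure M `<=` U, ~` interior N `<=` W & U `&` W = set0].
  apply: Hnorm; [exact: closed_closure | rewrite closedC; exact: open_interior|].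
  by apply/seteqP; split => x // [/HNM].
have UUi : U `<=` interior U by rewrite -open_subsetE.
have nbU : nbhd_of U M by move=> x /sMU /UUi.
have clU : closure U `<=` interior N.
  have cW : closed (~` W) by rewrite closedC.
  have UW : U `<=` ~` W.
    by move=> x Ux Wx; have : (U `&` W) x by []; rewrite UW0.
  move=> x /(closureS UW); rewrite -((closure_id _).1 cW) => nWx.
  by apply: contrapT => nNx; exact: nWx (sCW _ nNx).
have [t0 [t0p Ht0]] := Hatt N HNM.
have domN : forall x s, N x -> 0 <= s -> lsf_dom T (s, x).
  by move=> x s Nx s0; split => //=; rewrite HinfN //; exact: ltry.
have imN : forall x s, N x -> 0 <= s -> lsf_image T phi [set s] N (phi s x).
  by move=> x s Nx s0; exists x, s; split => //; exact: domN.
have fwdN : forall x s, N x -> t0 < s -> N (phi s x).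
  move=> x s Nx s0; apply: (Ht0 s s0); apply: imN => //.
  exact: ltW (lt_trans t0p s0).
have sgN : forall x r s, N x -> 0 <= r -> 0 <= s ->
    phi (r + s) x = phi r (phi s x) /\ lsf_dom T (r, phi s x).
  move=> x r s Nx r0 s0.
  have [h1 h2] := Hsg r s x r0 s0 (ltac:(rewrite HinfN //; exact: ltry)).
  by split.
have L : forall (x : nat -> X) (s : nat -> R), (forall n, N (x n)) ->
    tends_to_infty s ->
    exists (g : nat -> nat) (y : X), [/\ (forall n, (g n < g n.+1)%N),
      (forall n, t0 + 1 <= s (g n)), omega T phi N y &
      (fun n => phi (s (g n)) (x (g n))) @ \oo --> y].
  move=> x s Nx Hs; have Hs' := (@tti_P _ s).1 Hs.
  have [n0 Hn0] := Hs' (t0 + 1).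
  pose x' := fun n => phi (t0 + 1) (x (n + n0)%N).
  pose s' := fun n => s (n + n0)%N - (t0 + 1).
  have Nx' : forall n, N (x' n).
    by move=> n; apply: fwdN => //; lra.
  have s'0 : forall n, 0 <= s' n.
    by move=> n; have := Hn0 (n + n0)%N (leq_addl _ _); rewrite /s'; lra.
  have Hs'' : tends_to_infty s'.
    apply/tti_P => A; have [n1 Hn1] := Hs' (A + (t0 + 1)); exists n1 => n Hn.
    by have := Hn1 (n + n0)%N (leq_trans Hn (leq_addr _ _)); rewrite /s'; lra.
  have Econv : forall n, phi (s' n) (x' n) = phi (s (n + n0)%N) (x (n + n0)%N).
    move=> n; rewrite /x' -(sgN _ _ _ (Nx _) (s'0 n) _).1; last lra.
    by rewrite /s' subrK.
  have := Hadm x' s' Nx' Hs'' (fun n => domN _ _ (Nx' n) (s'0 n)).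
  case.
    move=> n z [w [r [wx rI Dr ->]]].
    move: rI; rewrite /= in_itv /= => /andP[r0 _].
    rewrite wx /x' -(sgN _ _ _ (Nx _) r0 _).1; last lra.
    by apply: fwdN => //; lra.
  move=> f [y [Hf _ Hc]].
  have Hg : forall n, ((f n + n0) < (f n.+1 + n0))%N.
    by move=> n; rewrite ltn_add2r; exact: Hf.
  have Hc' : (fun n => phi (s (f n + n0)%N) (x (f n + n0)%N)) @ \oo --> y.
    suff -> : (fun n => phi (s (f n + n0)%N) (x (f n + n0)%N)) =
      ((fun n => phi (s' n) (x' n)) \o f) by [].
    by apply: funext => n /=; rewrite Econv.
  exists (fun n => (f n + n0)%N), y; split => //.
  - by move=> n; apply: Hn0; exact: leq_addl.
  exists (fun n => x (f n + n0)%N), (fun n => s (f n + n0)%N); split => //.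
  - exact: (@subseq_tti _ s (fun n => (f n + n0)%N) Hg Hs).
  - move=> n; apply: domN => //; have := Hn0 (f n + n0)%N (leq_addl _ _); lra.
have omU : forall y, omega T phi N y -> closure U y.
  move=> y [x [t [Nx Ht Dt Hc]]].
  have [t1 [t1p Ht1]] := Hatt U nbU.
  apply: (@seq_closure _ _ _ _ Hc).
  have [n0 Hn0] := (@tti_P _ t).1 Ht (t1 + 1).
  exists n0 => n Hn; apply: (Ht1 (t n)); first by have := Hn0 n Hn; lra.
  by exists (x n), (t n); split.
have omN : omega T phi N `<=` N by move=> y Hy; apply: NiN; apply: clU; exact: omU.
have nbom : nbhd_of N (omega T phi N).
  move=> y Hy; apply: clU.
  have cc : closed (closure U) by exact: closed_closure.
  have := closureS omU Hy; rewrite -((closure_id _).1 cc).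
  by [].
have contS : forall (t : R) (z : nat -> X) (v : X), 0 <= t -> N v ->
    (forall n, lsf_dom T (t, z n)) -> z @ \oo --> v ->
    (fun n => phi t (z n)) @ \oo --> phi t v.
  move=> t z v tp Nv Dz Hz.
  exact: (@within_seq _ _ _ (fun p : R * X => phi p.1 p.2) (t, v)
    (fun n => (t, z n)) Hcont (domN _ _ Nv tp) Dz (@pair_cvg _ _ t _ _ Hz)).
have inv : Defs.invariant T phi (omega T phi N).
  move=> t tp; split.
    move=> _ [y [t' [Hy -> Dy ->]]].
    case: (Hy) => [x [s [Nx Hs Ds Hc]]].
    exists x, (fun n => t + s n); split => //.
    - apply/tti_P => A; have [n0 H] := (@tti_P _ s).1 Hs (A - t).
      by exists n0 => n /H; lra.
    - by move=> n; apply: domN => //; have := (Ds n).1; rewrite /=; lra.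
    have E : (fun n => phi (t + s n) (x n)) = (fun n => phi t (phi (s n) (x n))).
      by apply: funext => n; exact: (sgN _ _ _ (Nx n) tp (Ds n).1).1.
    rewrite E; apply: contS => //; first exact: omN.
    by move=> n; exact: (sgN _ _ _ (Nx n) tp (Ds n).1).2.
  move=> y Hy; case: (Hy) => [x [s [Nx Hs Ds Hc]]].
  have Hs2 : tends_to_infty (fun n => s n - t).
    apply/tti_P => A; have [n0 H] := (@tti_P _ s).1 Hs (A + t).
    by exists n0 => n /H; lra.
  have [g [v [Hg Hge Hv Hcv]]] := L x _ Nx Hs2.
  exists v, t; split => //; first exact: domN (omN v Hv) tp.
  have Hsg0 : forall k, 0 <= s (g k) - t by move=> k; have := Hge k; lra.
  have E : (fun k => phi t (phi (s (g k) - t) (x (g k)))) =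
           (fun k => phi (s (g k)) (x (g k))).
    apply: funext => k; rewrite -(sgN _ _ _ (Nx (g k)) tp (Hsg0 k)).1.
    by congr phi; lra.
  have C1 : (fun k => phi (s (g k)) (x (g k))) @ \oo --> y.
    exact: (@subseq_cvgX _ (fun n => phi (s n) (x n)) y g Hg Hc).
  have C2 : (fun k => phi (s (g k)) (x (g k))) @ \oo --> phi t v.
    rewrite -E; apply: contS => //; first exact: omN.
    by move=> k; exact: (sgN _ _ _ (Nx (g k)) tp (Hsg0 k)).2.
  exact: (cvg_unique Hhaus C1 C2).
have natinf : tends_to_infty (fun n : nat => (n%:R : R)) := @tti_nat R.
split.
- have Nm : N m by apply: NiN; apply: HNM; exact: subset_closure.
  have [g [y [_ _ Hy _]]] := L (fun _ => m) _ (fun _ => Nm) natinf.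
  by exists y.
- move=> u Hu.
  have [v Hv] : {v : nat -> X & forall k, omega T phi N (v k) /\
      lsf_dom T (k%:R, v k) /\ u k = phi k%:R (v k)}.
    apply: (@choice nat X (fun k w => omega T phi N w /\
      lsf_dom T (k%:R, w) /\ u k = phi k%:R w)) => k.
    have [_ /(_ (u k) (Hu k))] := inv k%:R (ler0n _ _).
    by move=> [w [r [Hw -> Dw ->]]]; exists w.
  have [g [y [Hg _ Hy Hc]]] := L v _ (fun k => omN _ (Hv k).1) natinf.
  exists g, y; split => //.
  suff -> : u \o g = (fun n => phi (g n)%:R (v (g n))) by [].
  by apply: funext => n /=; rewrite (Hv (g n)).2.2.
- exact: inv.
exists N; split => //.
  split => // V HV.
  apply: contrapT => Hno.
  have Hn : forall n : nat, exists p : X * R, [/\ N p.1, n%:R + 1 < p.2,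
      0 <= p.2 & ~ V (phi p.2 p.1)].
    move=> n; apply: contrapT => Hc; apply: Hno.
    exists (n%:R + 1); split; first by have := ler0n R n; lra.
    move=> t Ht _ [x [t' [Nx -> Dx ->]]].
    apply: contrapT => nV; apply: Hc; exists (x, t); split => //.
    by have := (Dx).1.
  have [p Hp] := choice Hn.
  have HpN : forall n, N (p n).1 by move=> n; have [] := Hp n.
  have Ht : tends_to_infty (fun n => (p n).2).
    apply/tti_P => A; have [n0 H] := (@tti_P _ _).1 natinf A.
    by exists n0 => n /H; have [_ ? _ _] := Hp n; lra.
  have [g [y [Hg _ Hy Hc]]] := L (fun n => (p n).1) _ HpN Ht.
  have : interior V y by apply: HV; exact: subset_closure.
  move=> /Hc /near_oo_P [n0 Hn0].
  by have [_ _ _] := Hp (g n0); apply; exact: Hn0.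
move=> K _ HK KN y Ky.
have [z Hz] : {z : nat -> X & forall n, K (z n) /\ lsf_dom T (n%:R, z n) /\
    y = phi n%:R (z n)}.
  apply: (@choice nat X (fun n w => K w /\ lsf_dom T (n%:R, w) /\
    y = phi n%:R w)) => n.
  have [_ /(_ y Ky)] := HK n%:R (ler0n _ _).
  by move=> [w [r [Hw -> Dw ->]]]; exists w.
exists z, (fun n => n%:R); split => //.
- by move=> n; apply: KN; exact: (Hz n).1.
- by move=> n; exact: (Hz n).2.1.
suff -> : (fun n => phi n%:R (z n)) = (fun _ => y) by exact: cvg_cst.
by apply: funext => n; rewrite -(Hz n).2.2.
Qed.
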